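(* Let $p$ be a prime, $s\geq 2$, and $\lambda_i\in\{0,1,\dots,p-1\}$ for $i\in\{0,\dots,s-1\}$. Then $$\phi_s\Big(\sum_{i=0}^{s-1}\lambda_ip^i\Big)=\gamma_s\Big(\Phi_{s-1}\Big(\sum_{i=0}^{s-1}\tau_s(\lambda_ip^i)\Big)\Big),$$ where the inner sum is computed in $\mathbb{Z}_{p^{s-1}}^p$.
   Context: For $r\geq1$ and $u\in\mathbb{Z}_{p^r}$ with $p$-ary expansion $u=\sum_{i=0}^{r-1}u_ip^i$, $\phi_r(u)=(u_{r-1},\dots,u_{r-1})+(u_0,\dots,u_{r-2})Y_{r-1}\in\mathbb{Z}_p^{p^{r-1}}$, where $Y_1=(0\ 1\ \cdots\ p-1)$ and $Y_k$ is the $k\times p^k$ matrix with first $k-1$ rows $(Y_{k-1}\ \cdots\ Y_{k-1})$ ($p$ copies) and last row $(0,\dots,0,1,\dots,1,\dots,p-1,\dots,p-1)$ (blocks of length $p^{k-1}$); $\phi_1=\mathrm{id}$; $\Phi_r:\mathbb{Z}_{p^r}^n\to\mathbb{Z}_p^{np^{r-1}}$ applies $\phi_r$ coordinatewise and concatenates. $\gamma_s$ is the coordinate permutation of $\mathbb{Z}_p^{p^{s-1}}$ given by $\gamma_s(\mathbf{x})_{j+ip+1}=\mathbf{x}_{jp^{s-2}+i+1}$ for $j\in\{0,\dots,p-1\}$, $i\in\{0,\dots,p^{s-2}-1\}$. The map $\tau_s:\mathbb{Z}_{p^s}\to\mathbb{Z}_{p^{s-1}}^p$ is $\tau_s(u)=\Phi_{s-1}^{-1}(\gamma_s^{-1}(\phi_s(u)))$.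 *)

(* Defs.v *)
From HB Require Import structures.
From mathcomp Require Import all_boot all_order all_algebra.
Unset Printing Implicit Defensive.
Import GRing.Theory.
Local Open Scope ring_scope.

Definition digit (p i u : nat) : nat := ((u %/ p ^ i) %% p)%N.

(* Entries of the matrix Y_k, as natural numbers (row i, column j, 0-indexed):
   Y_1 = (0 1 ... p-1); Y_{k} has first k-1 rows (Y_{k-1} ... Y_{k-1}) (p copies)
   and last row (0..0,1..1,...,p-1..p-1) with blocks of length p^{k-1}.
   (Y_0 is the empty 0 x 1 matrix.) *)
Fixpoint Ynat (p k i j : nat) : nat :=
  match k with
  | 0 => 0%N
  | k'.+1 => if (i < k')%N then Ynat p k' i (j %% p ^ k') else (j %/ p ^ k')%N
  end.

Definition Ymx (p k : nat) : 'M['Z_p]_(k, p ^ k) :=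
  \matrix_(i < k, j < p ^ k) (Ynat p k i j)%:R.

Definition phi (p r : nat) (u : 'Z_(p ^ r)) : 'rV['Z_p]_(p ^ (r - 1)) :=
  const_mx (digit p (r - 1) u)%:R
  + (\row_(i < r - 1) (digit p i u)%:R) *m Ymx p (r - 1).

(* k-th (0-indexed) coordinate of a row vector, 0 if out of range *)
Definition entry {T : zmodType} {m : nat} (x : 'rV[T]_m) (k : nat) : T :=
  if @insub nat (fun k => (k < m)%N) 'I_m k is Some i then x 0 i else 0.

(* Phi_r : Z_{p^r}^n -> Z_p^{n p^{r-1}}: phi_r coordinatewise, concatenated *)
Definition Phi (p r n : nat) (v : 'rV['Z_(p ^ r)]_n) : 'rV['Z_p]_(n * p ^ (r - 1)) :=
  \row_(k < n * p ^ (r - 1))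
     entry (phi p r (entry v (k %/ p ^ (r - 1))%N)) (k %% p ^ (r - 1))%N.

(* gamma_s : coordinate permutation of Z_p^{p^{s-1}} (the domain is written
   Z_p^{p * p^{s-2}}, the output length of Phi_{s-1} on Z_{p^{s-1}}^p):
   gamma_s(x)_{j + i p} = x_{j p^{s-2} + i} (0-indexed), j < p, i < p^{s-2}. *)
Definition gamma (p s : nat) (x : 'rV['Z_p]_(p * p ^ (s - 1 - 1))) : 'rV['Z_p]_(p ^ (s - 1)) :=
  \row_(k < p ^ (s - 1)) entry x ((k %% p) * p ^ (s - 2) + k %/ p)%N.

(* tau_s(u) = Phi_{s-1}^{-1}(gamma_s^{-1}(phi_s(u))): the (unique, Phi_{s-1} and
   gamma_s being injective) v in Z_{p^{s-1}}^p with gamma_s(Phi_{s-1}(v)) = phi_s(u);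
   0 if no such v exists. *)
Definition tau (p s : nat) (u : 'Z_(p ^ s)) : 'rV['Z_(p ^ (s - 1))]_p :=
  odflt 0 [pick v : 'rV['Z_(p ^ (s - 1))]_p | gamma p s (Phi p (s - 1) p v) == phi p s u].

(* Main.v *)
Require Import Defs.
From HB Require Import structures.
From mathcomp Require Import all_boot all_order all_algebra zify.
Import GRing.Theory.
Local Open Scope ring_scope.

Section Nat.
Local Open Scope nat_scope.
Variable p : nat.
Hypothesis Hp : (1 < p)%N.
Let p0 : (0 < p)%N. Proof. exact: ltnW. Qed.
Let pe0 k : (0 < p ^ k)%N. Proof. by rewrite expn_gt0 p0. Qed.

Lemma digit_sum_bound m (d : nat -> nat) :
  (forall i, (i < m)%N -> (d i < p)%N) -> (\sum_(i < m) d i * p ^ i < p ^ m)%N.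
Proof.
elim: m => [|m IH] H; first by rewrite big_ord0.
rewrite big_ord_recr /= expnS.
have h1 := IH (fun i hi => H i (ltnW hi)).
have h2 := H m (ltnSn m).
apply: (leq_trans (n := (d m).+1 * p ^ m)).
  by rewrite mulSn ltn_add2r.
by rewrite leq_mul2r h2 orbT.
Qed.

Lemma digitDM j m x y : (j < m)%N -> digit p j (x + y * p ^ m) = digit p j x.
Proof.
move=> jm; rewrite /digit.
have -> : (y * p ^ m = (y * p ^ (m - j)) * p ^ j)%N by rewrite -mulnA -expnD subnK // ltnW.
rewrite addnC divnMDl //.
have -> : (m - j = (m - j).-1.+1)%N by rewrite prednK // subn_gt0.
by rewrite expnS mulnA mulnAC modnMDl.
Qed.

Lemma digit_top m x y : (x < p ^ m)%N -> (y < p)%N -> digit p m (x + y * p ^ m) = y.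
Proof.
move=> hx hy; rewrite /digit addnC divnMDl // divn_small // addn0 modn_small //.
Qed.

Lemma digit_sum m (d : nat -> nat) j :
  (forall i, (i < m)%N -> (d i < p)%N) -> (j < m)%N ->
  digit p j (\sum_(i < m) d i * p ^ i) = d j.
Proof.
elim: m => [|m IH] H jm; first by [].
rewrite big_ord_recr /=.
have H' := (fun i hi => H i (ltnW hi)).
case: (ltngtP j m) => hj.
- by rewrite digitDM // IH.
- by move: jm; rewrite ltnS leqNgt hj.
- by rewrite hj digit_top // ?digit_sum_bound // H.
Qed.

Lemma digit_inj m x y : (x < p ^ m)%N -> (y < p ^ m)%N ->
  (forall i, (i < m)%N -> digit p i x = digit p i y) -> x = y.
Proof.
elim: m x y => [|m IH] x y hx hy H.
  by move: hx hy; rewrite expn0 !ltnS !leqn0 => /eqP -> /eqP ->.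
have h0 := H 0%N (ltn0Sn m); rewrite /digit expn0 !divn1 in h0.
have hdiv z : (z < p ^ m.+1)%N -> (z %/ p < p ^ m)%N by move=> hz; rewrite ltn_divLR // -expnSr.
suff e : x %/ p = y %/ p by rewrite (div.divn_eq x p) (div.divn_eq y p) e h0.
apply: IH; rewrite ?hdiv // => i hi.
have := H i.+1 hi; rewrite /digit -!divnMA -expnS //.
Qed.

Lemma digit_mod i k j : (i < k)%N -> digit p i (j %% p ^ k) = digit p i j.
Proof.
move=> ik; rewrite {2}(div.divn_eq j (p ^ k)) addnC digitDM //.
Qed.

Lemma Ynat_digit k i j : (i < k)%N -> (j < p ^ k)%N -> Ynat p k i j = digit p i j.
Proof.
elim: k i j => [|k IH] i j // ik jk /=.
case: ifP => h.
  by rewrite IH ?ltn_pmod // digit_mod.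
have -> : i = k by apply/eqP; rewrite eqn_leq -ltnS ik leqNgt h.
by rewrite /digit modn_small // ltn_divLR // -expnS.
Qed.

Lemma digit_single i j l : (l < p)%N ->
  digit p j (l * p ^ i) = if j == i then l else 0%N.
Proof.
move=> hl; case: (ltngtP j i) => h.
- by rewrite -(add0n (l * _)) digitDM // /digit div0n mod0n.
- rewrite /digit divn_small ?mod0n //.
  apply: (leq_trans (n := p ^ i.+1)); first by rewrite expnS ltn_pmul2r.
  by rewrite leq_exp2l.
- by rewrite h /digit mulnK // modn_small.
Qed.
End Nat.

Lemma entryE (T : zmodType) m (x : 'rV[T]_m) k (H : (k < m)%N) :
  entry x k = x 0 (Ordinal H).
Proof. by rewrite /entry insubT. Qed.

Section Mx.
Variable p : nat.
Hypothesis Hp : (1 < p)%N.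
Let p0 : (0 < p)%N. Proof. exact: ltnW. Qed.
Let pe0 k : (0 < p ^ k)%N. Proof. by rewrite expn_gt0 p0. Qed.

Lemma phiE r (u : 'Z_(p ^ r)) (j : 'I_(p ^ (r - 1))) :
  phi p r u 0 j = (digit p (r - 1) u)%:R + \sum_(i < r - 1) (digit p i u * digit p i j)%:R.
Proof.
rewrite /phi !mxE; congr (_ + _); apply: eq_bigr => i _.
by rewrite !mxE Ynat_digit // natrM.
Qed.

Lemma GPE s (v : 'rV['Z_(p ^ (s - 1))]_p) (k : 'I_(p ^ (s - 1)))
  (H1 : (k %% p < p)%N) (H2 : (k %/ p < p ^ (s - 1 - 1))%N) :
  (2 <= s)%N ->
  gamma p s (Phi p (s - 1) p v) 0 k =
  phi p (s - 1) (v 0 (Ordinal H1)) 0 (Ordinal H2).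
Proof.
move=> hs.
have e2 : (s - 2 = s - 1 - 1)%N by rewrite -subnDA.
have Hidx : ((k %% p) * p ^ (s - 2) + k %/ p < p * p ^ (s - 1 - 1))%N.
  rewrite e2; apply: (leq_trans (n := (k %% p).+1 * p ^ (s - 1 - 1))).
    by rewrite mulSn addnC ltn_add2r.
  by rewrite leq_mul2r H1 orbT.
rewrite /gamma mxE (@entryE _ _ _ _ Hidx) /Phi mxE /=.
have -> : (((k %% p) * p ^ (s - 2) + k %/ p) %/ p ^ (s - 1 - 1) = k %% p)%N.
  by rewrite e2 divnMDl // divn_small // addn0.
have -> : (((k %% p) * p ^ (s - 2) + k %/ p) %% p ^ (s - 1 - 1) = k %/ p)%N.
  by rewrite e2 modnMDl modn_small.
by rewrite (@entryE _ _ _ _ H1) (@entryE _ _ _ _ H2).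
Qed.

Lemma sum_recl_nat (R : nmodType) m (F : nat -> R) : (0 < m)%N ->
  \sum_(i < m) F i = F 0%N + \sum_(i < m - 1) F i.+1.
Proof. by case: m => // m _; rewrite big_ord_recl subSS subn0. Qed.

Lemma digit0 k : digit p 0 k = (k %% p)%N.
Proof. by rewrite /digit expn0 divn1. Qed.

Lemma digitS i k : digit p i.+1 k = digit p i (k %/ p).
Proof. by rewrite /digit -divnMA -expnS. Qed.

Definition ee s u a i : nat :=
  if (i < s - 1 - 1)%N then digit p i.+1 u
  else ((digit p (s - 1) u + digit p 0 u * a) %% p)%N.

Definition wn s u a : nat := \sum_(i < s - 1) ee s u a i * p ^ i.

Definition W {s} (u : 'Z_(p ^ s)) : 'rV['Z_(p ^ (s - 1))]_p :=
  \row_(a < p) (wn s u a)%:R.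

Lemma ee_lt s u a i : (ee s u a i < p)%N.
Proof. by rewrite /ee; case: ifP => _; rewrite ?ltn_pmod // /digit ltn_pmod. Qed.

Lemma val_natZp m x : (x < p ^ m)%N -> (0 < m)%N -> ((x%:R : 'Z_(p ^ m)) : nat) = x.
Proof.
move=> hx hm; rewrite val_Zp_nat ?modn_small //.
by have := ltn_exp2l 0 m Hp; rewrite expn0 => ->.
Qed.

Lemma GW s (u : 'Z_(p ^ s)) : (2 <= s)%N ->
  gamma p s (Phi p (s - 1) p (W u)) = phi p s u.
Proof.
move=> hs; apply/rowP => k.
have H1 : (k %% p < p)%N by rewrite ltn_pmod.
have H2 : (k %/ p < p ^ (s - 1 - 1))%N.
  have e : (p ^ (s - 1 - 1) * p = p ^ (s - 1))%N.
    by rewrite -expnSr subn1 prednK // subn_gt0.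
  by rewrite ltn_divLR // e.
rewrite (GPE _ _ _ H1 H2) // phiE phiE mxE /=.
have hs1 : (0 < s - 1)%N by rewrite subn_gt0.
rewrite val_natZp //; last by rewrite digit_sum_bound // => i _; exact: ee_lt.
have hd i : (i < s - 1)%N -> digit p i (wn s u (k %% p)) = ee s u (k %% p) i.
  by move=> hi; rewrite /wn digit_sum // => j _; exact: ee_lt.
have hs2 : (s - 1 - 1 < s - 1)%N by rewrite subn1 prednK.
rewrite hd // /ee ltnn.
rewrite (sum_recl_nat _ _ (fun i => (digit p i u * digit p i k)%:R) hs1).
under eq_bigr => i _ do rewrite hd ?(ltn_trans (ltn_ord i)) // /ee ltn_ord.
rewrite Zp_nat_mod // natrD addrA !digit0.
by congr (_ + _); apply: eq_bigr => i _; rewrite !digitS.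
Qed.

Lemma digit_pow i k : digit p k (p ^ i)%N = if k == i then 1%N else 0%N.
Proof. by rewrite -(mul1n (p ^ i)%N) digit_single. Qed.

Lemma valZp d : (d < p)%N -> ((d%:R : 'Z_p) : nat) = d.
Proof. by move=> hd; rewrite val_Zp_nat // modn_small. Qed.

Lemma sum_single m i x : (i < m)%N ->
  \sum_(k < m) ((digit p k x * digit p k (p ^ i)%N)%:R : 'Z_p) = (digit p i x)%:R.
Proof.
move=> hi; rewrite (bigD1 (Ordinal hi)) //= digit_pow eqxx muln1 big1 ?addr0 //.
move=> k hk; rewrite digit_pow; case: eqP => [e|_]; last by rewrite muln0.
by case/eqP: hk; apply: val_inj.
Qed.

Lemma ltZp r (x : 'Z_(p ^ r)) : (0 < r)%N -> (x < p ^ r)%N.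
Proof.
move=> hr; case: x => x /=; rewrite Zp_cast //.
by have := ltn_exp2l 0 r Hp; rewrite expn0 => ->.
Qed.

Lemma digit_lt i x : (digit p i x < p)%N.
Proof. by rewrite /digit ltn_pmod. Qed.

Lemma phi_inj r (x y : 'Z_(p ^ r)) : (0 < r)%N ->
  (forall j, phi p r x 0 j = phi p r y 0 j) -> x = y.
Proof.
move=> hr H; apply: val_inj; apply: (@digit_inj p Hp r); rewrite ?ltZp //.
have hq : (0 < p ^ (r - 1))%N by [].
have htop : digit p (r - 1) x = digit p (r - 1) y.
  have := H (Ordinal hq); rewrite !phiE.
  rewrite !big1 ?addr0 => [e||]; last 2 first.
  - by move=> k _; rewrite /digit div0n mod0n muln0.
  - by move=> k _; rewrite /digit div0n mod0n muln0.
  by have := congr1 (@nat_of_ord _) e; rewrite !valZp ?digit_lt.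
move=> i hi.
have [hi'|hi'] := ltnP i (r - 1).
  have hq' : (p ^ i < p ^ (r - 1))%N by rewrite ltn_exp2l.
  have := H (Ordinal hq'); rewrite !phiE /= !sum_single // htop => /addrI e.
  by have := congr1 (@nat_of_ord _) e; rewrite !valZp ?digit_lt.
have -> : i = (r - 1)%N by lia.
exact: htop.
Qed.

Lemma Winj s (v v' : 'rV['Z_(p ^ (s - 1))]_p) : (2 <= s)%N ->
  gamma p s (Phi p (s - 1) p v) = gamma p s (Phi p (s - 1) p v') -> v = v'.
Proof.
move=> hs Heq; apply/rowP => a; apply: (@phi_inj (s - 1)); first by rewrite subn_gt0.
move=> j.
have Hk : (a + p * j < p ^ (s - 1))%N.
  have e : (p * p ^ (s - 1 - 1) = p ^ (s - 1))%N.
    by rewrite -expnS subn1 prednK // subn_gt0.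
  rewrite -e; apply: (leq_trans (n := p * j.+1)).
    by rewrite mulnS ltn_add2r.
  by rewrite leq_mul2l ltn_ord orbT.
have H1 : ((Ordinal Hk : nat) %% p < p)%N by rewrite ltn_pmod.
have H2 : ((Ordinal Hk : nat) %/ p < p ^ (s - 1 - 1))%N.
  by rewrite /= mulnC divnDMl // divn_small // add0n.
move/rowP: Heq => E; move: (E (Ordinal Hk)).
rewrite !(GPE _ _ _ H1 H2) //.
have -> : Ordinal H1 = a by apply: val_inj; rewrite /= addnC mulnC modnMDl modn_small.
have -> : Ordinal H2 = j by apply: val_inj; rewrite /= mulnC divnDMl // divn_small // add0n.
done.
Qed.

Lemma tauE s (u : 'Z_(p ^ s)) : (2 <= s)%N -> tau p s u = W u.
Proof.
move=> hs; rewrite /tau; case: pickP => [v /eqP Hv | H] /=.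
  by apply: (@Winj s) => //; rewrite Hv GW.
by have := H (W u); rewrite GW // eqxx.
Qed.

Lemma sum_recr_nat (R : nmodType) m (F : nat -> R) : (0 < m)%N ->
  \sum_(i < m) F i = \sum_(i < m - 1) F i + F (m - 1)%N.
Proof. by case: m => // m _; rewrite big_ord_recr /= subSS subn0. Qed.

Lemma wnR s u a : (2 <= s)%N ->
  ((wn s u a)%:R : 'Z_(p ^ (s - 1))) =
  (\sum_(i < s - 1 - 1) digit p i.+1 u * p ^ i
     + (digit p (s - 1) u + digit p 0 u * a) * p ^ (s - 1 - 1))%N%:R.
Proof.
move=> hs; have hs1 : (0 < s - 1)%N by rewrite subn_gt0.
rewrite /wn (sum_recr_nat _ _ (fun i => ee s u a i * p ^ i)%N hs1).
rewrite {2}/ee ltnn.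
rewrite (eq_bigr (fun i : 'I_(s - 1 - 1) => digit p i.+1 u * p ^ i)%N); last first.
  by move=> i _; rewrite /ee ltn_ord.
rewrite !natrD; congr (_ + _).
have hM : (1 < p ^ (s - 1))%N by have := ltn_exp2l 0 (s - 1) Hp; rewrite expn0 => ->.
have e : (p * p ^ (s - 1 - 1) = p ^ (s - 1))%N by rewrite -expnS subn1 prednK.
rewrite -(Zp_nat_mod hM) -e muln_modl modn_mod e Zp_nat_mod //.
Qed.
End Mx.

Theorem proposition1 (p s : nat) (lam : 'I_s -> 'I_p) :
  prime p -> (2 <= s)%N ->
  phi p s (\sum_(i < s) ((lam i : nat) * p ^ i)%:R) =
  gamma p s (Phi p (s - 1) p
    (\sum_(i < s) tau p s (((lam i : nat) * p ^ i)%:R))).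
Proof.
move=> pr hs; have Hp := prime_gt1 pr.
have p0 : (0 < p)%N by apply: ltnW.
pose lamn j : nat := if @insub nat (fun k => (k < s)%N) 'I_s j is Some i then lam i else 0%N.
have lamnE (i : 'I_s) : lamn i = lam i.
  rewrite /lamn insubT /= => [|H]; first exact: ltn_ord.
  by congr (nat_of_ord (lam _)); apply: val_inj.
have lamn_lt j : (lamn j < p)%N.
  by rewrite /lamn; case: insub => // i; exact: ltn_ord.
have hsum : (\sum_(i < s) ((lam i : nat) * p ^ i)%:R : 'Z_(p ^ s))
          = (\sum_(i < s) lamn i * p ^ i)%N%:R.
  by rewrite natr_sum; apply: eq_bigr => j _; rewrite lamnE.
have hs0 : (0 < s)%N by apply: ltnW.
have hvU : ((\sum_(i < s) lamn i * p ^ i)%N%:R : 'Z_(p ^ s)) = (\sum_(i < s) lamn i * p ^ i)%N :> nat.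
  by rewrite val_natZp // digit_sum_bound.
have hvi (i : 'I_s) : (((lam i : nat) * p ^ i)%N%:R : 'Z_(p ^ s)) = ((lam i : nat) * p ^ i)%N :> nat.
  rewrite val_natZp //.
  apply: (leq_trans (n := (p ^ i.+1)%N)); first by rewrite expnS ltn_pmul2r ?expn_gt0 ?p0.
  by rewrite leq_exp2l.
under [X in gamma _ _ (Phi _ _ _ X)]eq_bigr => i _ do rewrite (tauE _ Hp) //.
rewrite hsum.
suff -> : \sum_(i < s) W p (((lam i : nat) * p ^ i)%N%:R : 'Z_(p ^ s))
          = W p ((\sum_(i < s) lamn i * p ^ i)%N%:R : 'Z_(p ^ s)) by rewrite GW.
apply/rowP => a; rewrite summxE !mxE.
under eq_bigr => i _ do rewrite mxE (wnR _ Hp) // hvi.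
rewrite (wnR _ Hp) // hvU -natr_sum; congr (_%:R).
have dU j : (j < s)%N -> digit p j (\sum_(i < s) lamn i * p ^ i)%N = lamn j.
  by move=> hj; rewrite digit_sum.
have di (i : 'I_s) j : digit p j (lam i * p ^ i)%N = if j == i then (lam i : nat) else 0%N.
  by rewrite digit_single.
have hind j : (j < s)%N -> (\sum_(i < s) (if j == i then (lam i : nat) else 0%N))%N = lamn j.
  move=> hj; rewrite (bigD1 (Ordinal hj)) //= eqxx big1 ?addn0 -?(lamnE (Ordinal hj)) //.
  move=> i hi; case: eqP => // e; case/eqP: hi; exact: val_inj.
have hs1 : (s - 1 < s)%N by rewrite subn1 prednK.
have hs2 (j : 'I_(s - 1 - 1)) : (j.+1 < s)%N.
  by case: j => j /= hj; lia.
rewrite big_split /= exchange_big /= -big_distrl /=.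
congr (_ + _).
  apply: eq_bigr => j _; rewrite -big_distrl /= dU //; congr (_ * _).
  by rewrite -hind //; apply: eq_bigr => i _; rewrite di.
congr (_ * _); rewrite big_split /= -big_distrl /= !dU //.
by congr (_ + _ * _); rewrite -hind //; apply: eq_bigr => i _; rewrite di.
Qed.
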